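(* Let $q$ be a power of an odd prime and fix a partition $\mathbb{F}_q^*=\mathbb{F}_q^+\sqcup\mathbb{F}_q^-$ such that $a\in\mathbb{F}_q^+$ if and only if $-a\in\mathbb{F}_q^-$. (i) Let $\theta\in\mathbb{F}_{q^2}\setminus\mathbb{F}_q$, so that $\mathbb{F}_{q^2}=\{a\theta+b:a,b\in\mathbb{F}_q\}$. Then both $\{(x,y\theta+z):x,z\in\mathbb{F}_q,\ y\in\mathbb{F}_q^+\}$ and $\{(x,y\theta+z):x,z\in\mathbb{F}_q,\ y\in\mathbb{F}_q^-\}$ are independent sets in $G_{q^2}$. (ii) Let $t\ge3$ be odd and let $\theta\in\mathbb{F}_{q^t}$ be such that $1,\theta,\dots,\theta^{t-1}$ is a basis of $\mathbb{F}_{q^t}$ over $\mathbb{F}_q$. Then both \[ \Big\{\Big(\sum_{i=0}^{(t-3)/2}x_i\theta^i,\ \sum_{j=0}^{t-1}y_j\theta^j\Big):x_i,y_j\in\mathbb{F}_q,\ y_{t-1}\in\mathbb{F}_q^+\Big\} \] and the analogous set with $y_{t-1}\in\mathbb{F}_q^-$ are independent sets in $G_{q^t}$.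
   Context: For a power $Q$ of an odd prime, the graph $G_Q$ has vertex set $\mathbb{F}_Q\times\mathbb{F}_Q$, and distinct vertices $(x_1,x_2)$, $(y_1,y_2)$ are adjacent if and only if $(x_1+y_1)^2=x_2+y_2$ (i.e. their sum lies in $\{(a,a^2):a\in\mathbb{F}_Q\}$); $G_Q$ has no loops. *)

(* Defs.v *)
From HB Require Import structures.
From mathcomp Require Import all_boot all_order all_algebra all_field.
Set Implicit Arguments. Unset Strict Implicit. Unset Printing Implicit Defensive.
Import GRing.Theory.
Local Open Scope ring_scope.

Definition GQadj (L : fieldType) : rel (L * L) :=
  fun u v => (u != v) && ((u.1 + v.1) ^+ 2 == u.2 + v.2).

Definition independent_set (L : fieldType) (S : L * L -> Prop) : Prop :=
  forall u v, S u -> S v -> ~~ GQadj u v.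

Definition sign_partition (F : finFieldType) (P M : {set F}) : Prop :=
  [/\ P :&: M = set0, P :|: M = [set a | a != 0] & forall a, (a \in P) = (- a \in M)].

(* Main.v *)
Require Import Defs.
From HB Require Import structures.
From mathcomp Require Import all_boot all_order all_algebra all_field.
From mathcomp Require Import ring.
From mathcomp Require Import zify.
Import GRing.Theory.
Local Open Scope ring_scope.

Lemma PM_sum (F : finFieldType) (P M : {set F}) : sign_partition P M ->
  (forall y y', y \in P -> y' \in P -> y + y' != 0) /\
  (forall y y', y \in M -> y' \in M -> y + y' != 0).
Proof.
case=> hI _ hN; split=> y y' hy hy'; apply/negP; rewrite addr_eq0 => /eqP e.
- have : y' \in P :&: M by rewrite inE hy' /= -(opprK y') -e -hN hy.
  by rewrite hI inE.
- have : y' \in P :&: M by rewrite inE hy' hN -e hy.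
  by rewrite hI inE.
Qed.

Lemma part1 (F : finFieldType) (S : {set F}) (L : fieldExtType F) (theta : L) :
  (forall y y', y \in S -> y' \in S -> y + y' != 0) -> theta \notin 1%VS ->
  independent_set (fun v : L * L => exists x z y : F, y \in S /\
                        v = (x%:A, y *: theta + z%:A)).
Proof.
move=> hS hth u v [x [z [y [hy ->]]]] [x' [z' [y' [hy' ->]]]].
rewrite /GQadj /= negb_and; apply/orP; right; apply/negP => /eqP e.
have hne := hS _ _ hy hy'.
apply: (negP hth).
have e2 : (y + y') *: theta = ((x + x') ^+ 2 - (z + z'))%:A.
  have h1 : (x%:A + x'%:A)^+2 = ((x+x')^+2)%:A :> L
    by rewrite -scalerDl -!in_algE rmorphXn.
  rewrite h1 in e.
  rewrite scalerBl e.
  rewrite !scalerDl; set a := y *: theta; set b := y' *: theta.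
  set c := z%:A; set d := z'%:A.
  clearbody a b c d; ring.
have -> : theta = (y + y')^-1 *: (((x + x') ^+ 2 - (z + z'))%:A).
  by rewrite -e2 scalerA mulVf // scale1r.
by apply: rpredZ; apply: rpredZ; apply: mem1v.
Qed.

Lemma part2 (F : finFieldType) (S : {set F}) (t : nat) (L : fieldExtType F) (theta : L) :
  (forall y y', y \in S -> y' \in S -> y + y' != 0) ->
  odd t -> (3 <= t)%N ->
  basis_of fullv [seq theta ^+ i | i <- iota 0 t] ->
  independent_set (fun v : L * L => exists x y : nat -> F, y t.-1 \in S /\
         v = (\sum_(i < t.-1./2) x i *: theta ^+ i,
              \sum_(j < t) y j *: theta ^+ j)).
Proof.
move=> hS ht t3 hb u v [x [y [hy ->]]] [x' [y' [hy' ->]]].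
rewrite /GQadj negb_and; apply/orP; right; apply/negP => /eqP /= e.
have hne := hS _ _ hy hy'.
set s := [seq theta ^+ i | i <- iota 0 t].
have hfree := basis_free hb.
have hsz : size s = t by rewrite size_map size_iota.
have jt : (t.-1 < size s)%N by rewrite hsz; lia.
have jt' : (t.-1 < t)%N by lia.
have hf : forall n, (n < t)%N -> coord (in_tuple s) (Ordinal jt) (theta ^+ n) = (n == t.-1)%:R.
  move=> n hn; have hn' : (n < size s)%N by rewrite hsz.
  have -> : theta ^+ n = (in_tuple s)`_(Ordinal hn').
    by rewrite /= (nth_map 0%N) ?size_iota // nth_iota.
  by rewrite coord_free.
have hR : forall w : nat -> F,
    coord (in_tuple s) (Ordinal jt) (\sum_(j < t) w j *: theta ^+ j) = w t.-1.
  move=> w; rewrite linear_sum (bigD1 (Ordinal jt')) //= big1; last first.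
    move=> i hi; rewrite linearZ /= hf //; move: hi; rewrite -val_eqE /= => /negbTE ->.
    by rewrite mulr0.
  by rewrite linearZ /= hf // eqxx mulr1 addr0.
have := congr1 (coord (in_tuple s) (Ordinal jt)) e.
have hRR : coord (in_tuple s) (Ordinal jt) ((\sum_(j < t) y j *: theta ^+ j) +
   (\sum_(j < t) y' j *: theta ^+ j)) = y t.-1 + y' t.-1.
  by rewrite -(hR y) -(hR y') linearD.
rewrite hRR.
set k := t.-1./2.
have hk : (k + k = t.-1)%N.
  rewrite addnn /k; have := odd_double_half t.-1.
  have ho : odd t.-1 = false by rewrite -subn1 oddB ?ht //; lia.
  by rewrite ho /= add0n.
rewrite -big_split /=.
under eq_bigr => i _ do rewrite -scalerDl.
rewrite expr2 mulr_suml linear_sum big1 /=.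
  by move=> /esym /eqP; rewrite (negbTE hne).
move=> i _; rewrite mulr_sumr linear_sum big1 //= => j _.
rewrite -scalerAl -scalerAr scalerA -exprD linearZ /= hf.
  have : (i + j < t.-1)%N by have := ltn_ord i; have := ltn_ord j; lia.
  by rewrite ltn_neqAle => /andP [/negbTE -> _]; rewrite mulr0.
have := ltn_ord i; have := ltn_ord j; lia.
Qed.

Theorem lemma3p1 (F : finFieldType) (hodd : odd #|F|) (P M : {set F})
    (hPM : sign_partition P M) :
  (* (i) quadratic extension *)
  (forall (L : fieldExtType F) (theta : L),
     \dim {:L} = 2%N -> theta \notin 1%VS ->
     independent_set (fun v : L * L => exists x z y : F, y \in P /\
                        v = (x%:A, y *: theta + z%:A)) /\
     independent_set (fun v : L * L => exists x z y : F, y \in M /\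
                        v = (x%:A, y *: theta + z%:A)))
  /\
  (* (ii) odd degree t >= 3 extension with power basis 1, theta, ..., theta^(t-1) *)
  (forall (t : nat) (L : fieldExtType F) (theta : L),
     odd t -> (3 <= t)%N -> \dim {:L} = t ->
     basis_of fullv [seq theta ^+ i | i <- iota 0 t] ->
     independent_set (fun v : L * L => exists x y : nat -> F, y t.-1 \in P /\
         v = (\sum_(i < t.-1./2) x i *: theta ^+ i,
              \sum_(j < t) y j *: theta ^+ j)) /\
     independent_set (fun v : L * L => exists x y : nat -> F, y t.-1 \in M /\
         v = (\sum_(i < t.-1./2) x i *: theta ^+ i,
              \sum_(j < t) y j *: theta ^+ j))).
Proof.
have [hP hM] := PM_sum _ _ _ hPM.
split.
  by move=> L theta _ hth; split; apply: part1.
by move=> t L theta ht t3 _ hb; split; apply: part2.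
Qed.
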